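(* For any $M>1$ there exists $\kappa_0=\kappa_0(M)>0$ such that for all integers $1\le m<M$ and all $0\le\kappa<\kappa_0$, there is a solution $(\lambda_1,b_0)\in\mathbb{R}\times C^\infty([-1,1])$ of $$(1+\lambda_1-z)\,b_0(z)=-\frac1{2m}\int_{-1}^1\varphi'_\kappa(\bar z)\,b_0(\bar z)\,d\bar z,\qquad z\in[-1,1].$$ For fixed $m$ and $\kappa$ this solution is unique (modulo multiplication of $b_0$ by a constant) and satisfies $$b_0(z)=\frac1{1+\lambda_1-z},\qquad \lambda_1=\frac{2}{e^{4m}-1}+\mathrm{error},\quad |\mathrm{error}|\le C(M)\kappa.$$ Moreover $\|b_0\|_{L^2([-1,1])}\le C(M)$, $\|\partial_z^kb_0\|_{L^\infty([-1,1])}\le C(k,M)$ for $k=0,1,2,\dots$, and the number $a_1$ defined by $2a_1=-\frac1{2m}e^{-2m}\int_{-1}^1\varphi'_\kappa(\bar z)b_0(\bar z)\,d\bar z$ equals $a_1=\frac12e^{-2m}$. Here the constants $C(M)$, $C(k,M)$ depend only on $M$ (and $k$), not on $m$ or $\kappa$.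
   Context: Fix $\Theta\in C^\infty(\mathbb{R})$, $\Theta>0$ on $(-1,1)$, $\operatorname{supp}\Theta\subset(-1,1)$, $\int\Theta=1$. For $\kappa>0$: $\Theta_\kappa(z)=\kappa^{-1}\Theta(z/\kappa)$, $\psi'_\kappa(z)=\int_{-1+\kappa}^{1-\kappa}\Theta_\kappa(z-\bar z)d\bar z$, and $\varphi_\kappa(z)=1-\int_{-1}^z\psi'_\kappa/\int_{-1}^1\psi'_\kappa$ for $z\in[-1,1]$; for $\kappa=0$, $\varphi_0(z)=(1-z)/2$. *)

(* Defs.v *)
From Stdlib Require Import Reals.
From Coquelicot Require Import Coquelicot.
Open Scope R_scope.

Definition smooth (g : R -> R) : Prop :=
  forall (n : nat) (x : R), ex_derive_n g n x.

(* f belongs to C^infinity([a,b]): f agrees on [a,b] with a C^infinity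
   function on R (Whitney/Seeley: same as one-sided smoothness). *)
Definition smooth_on_cc (a b : R) (f : R -> R) : Prop :=
  exists g : R -> R, smooth g /\ forall x, a <= x <= b -> f x = g x.

Definition Theta_k (Theta : R -> R) (k : R) (z : R) : R :=
  / k * Theta (z / k).

Definition psi'_k (Theta : R -> R) (k : R) (z : R) : R :=
  RInt (fun zb => Theta_k Theta k (z - zb)) (-1 + k) (1 - k).

Definition phi_k (Theta : R -> R) (k : R) (z : R) : R :=
  if Req_EM_T k 0 then (1 - z) / 2
  else 1 - RInt (psi'_k Theta k) (-1) z / RInt (psi'_k Theta k) (-1) 1.

Definition phi'_k (Theta : R -> R) (k : R) (z : R) : R :=
  Derive (phi_k Theta k) z.

Definition solves (Theta : R -> R) (m : nat) (k lam : R) (b : R -> R) : Prop :=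
  forall z, -1 <= z <= 1 ->
    (1 + lam - z) * b z =
      - (1 / (2 * INR m)) * RInt (fun zb => phi'_k Theta k zb * b zb) (-1) 1.

(* Main.v *)
Require Import Defs.
From Stdlib Require Import Reals Lra Lia.
From Coquelicot Require Import Coquelicot.
Open Scope R_scope.

Definition Cn (n : nat) (f : R -> R) : Prop :=
  forall k x, (k <= n)%nat -> ex_derive_n f k x.

Lemma DnS_eq (f : R -> R) (j : nat) (t : R) :
  Derive_n (Derive f) j t = Derive_n f (S j) t.
Proof.
  replace (S j) with (j + 1)%nat by lia.
  rewrite <- Derive_n_comp. apply Derive_n_ext. intros; reflexivity.
Qed.

Lemma exDnS (f : R -> R) (j : nat) (x : R) :
  ex_derive_n f (S (S j)) x <-> ex_derive_n (Derive f) (S j) x.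
Proof.
  change (ex_derive (Derive_n f (S j)) x <-> ex_derive (Derive_n (Derive f) j) x).
  split; intro H.
  - apply (ex_derive_ext (Derive_n f (S j))); [|exact H]. intro t. exact (eq_sym (DnS_eq f j t)).
  - apply (ex_derive_ext (Derive_n (Derive f) j)); [|exact H]. intro t. exact (DnS_eq f j t).
Qed.

Lemma exDn1 f x : ex_derive_n f 1 x <-> ex_derive f x.
Proof. simpl. tauto. Qed.
Lemma Cn_S n f : Cn (S n) f <-> (forall x, ex_derive f x) /\ Cn n (Derive f).
Proof.
  split.
  - intros H. split.
    + intro x. apply (proj1 (exDn1 f x)). apply H. lia.
    + intros k x Hk. destruct k as [|j]. simpl; trivial.
      apply (proj1 (exDnS f j x)). apply H. lia.
  - intros [H1 H2] k x Hk. destruct k as [|[|j]]. simpl; trivial. apply (proj2 (exDn1 f x)); apply H1.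
    apply (proj2 (exDnS f j x)). apply H2. lia.
Qed.

Lemma Cn_le m n f : (m <= n)%nat -> Cn n f -> Cn m f.
Proof. intros Hmn H k x Hk. apply H. lia. Qed.

Lemma Cn_ext n f g : (forall x, f x = g x) -> Cn n f -> Cn n g.
Proof. intros E H k x Hk. eapply ex_derive_n_ext. exact E. apply H; auto. Qed.

Lemma Cn_0 f : Cn 0 f.
Proof. intros k x Hk. assert (k = 0%nat) by lia. subst. exact I. Qed.

Lemma Cn_const n c : Cn n (fun _ => c).
Proof.
  revert c; induction n; intro c. apply Cn_0.
  apply Cn_S. split. intro; auto_derive; auto.
  eapply Cn_ext; [|exact (IHn 0)]. intro x. rewrite Derive_const. reflexivity.
Qed.

Lemma Cn_plus n f g : Cn n f -> Cn n g -> Cn n (fun x => f x + g x).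
Proof.
  revert f g; induction n; intros f g Hf Hg. apply Cn_0.
  apply Cn_S in Hf. apply Cn_S in Hg. destruct Hf as [Hf1 Hf2]. destruct Hg as [Hg1 Hg2].
  apply Cn_S. split. intro x. apply (ex_derive_plus f g); auto.
  eapply Cn_ext; [|exact (IHn _ _ Hf2 Hg2)]. intro x. rewrite Derive_plus; auto.
Qed.

Lemma Cn_mult n f g : Cn n f -> Cn n g -> Cn n (fun x => f x * g x).
Proof.
  revert f g; induction n; intros f g Hf Hg. apply Cn_0.
  pose proof (Cn_le n (S n) f ltac:(lia) Hf) as Hf'.
  pose proof (Cn_le n (S n) g ltac:(lia) Hg) as Hg'.
  apply Cn_S in Hf. apply Cn_S in Hg. destruct Hf as [Hf1 Hf2]. destruct Hg as [Hg1 Hg2].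
  apply Cn_S. split. intro x. apply ex_derive_mult; auto.
  eapply Cn_ext; [|exact (Cn_plus _ _ _ (IHn _ _ Hf2 Hg') (IHn _ _ Hf' Hg2))].
  intro x. rewrite Derive_mult; auto.
Qed.

Lemma Cn_scal n c f : Cn n f -> Cn n (fun x => c * f x).
Proof. intro H. apply Cn_mult; auto. apply Cn_const. Qed.

Lemma Cn_inv n f : Cn n f -> (forall x, f x <> 0) -> Cn n (fun x => / f x).
Proof.
  intros Hf Hnz. induction n. apply Cn_0.
  pose proof (Cn_le n (S n) f ltac:(lia) Hf) as Hf'.
  specialize (IHn Hf').
  apply Cn_S in Hf. destruct Hf as [Hf1 Hf2].
  apply Cn_S. split. intro x. apply ex_derive_inv; auto.
  eapply Cn_ext; [| exact (Cn_scal _ (-1) _ (Cn_mult _ _ _ Hf2 (Cn_mult _ _ _ IHn IHn)))].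
  intro x. rewrite Derive_inv; auto. field. auto.
Qed.

Lemma Cn_id n : Cn n (fun x => x).
Proof.
  destruct n. apply Cn_0. apply Cn_S. split. intro; auto_derive; auto.
  eapply Cn_ext; [|exact (Cn_const n 1)]. intro x. rewrite Derive_id. reflexivity.
Qed.

Lemma Cn_comp_aff n f a b : Cn n f -> Cn n (fun x => f (a * x + b)).
Proof.
  revert f; induction n; intros f Hf. apply Cn_0.
  apply Cn_S in Hf. destruct Hf as [Hf1 Hf2].
  apply Cn_S. split. intro x. apply ex_derive_comp; auto. auto_derive; auto.
  eapply Cn_ext; [|exact (Cn_scal _ a _ (IHn _ Hf2))].
  intro x. rewrite (Derive_comp f (fun x => a * x + b)); auto.
  replace (Derive (fun x => a * x + b) x) with a. reflexivity.
  symmetry; apply is_derive_unique; auto_derive; auto; ring.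
  auto_derive; auto.
Qed.

Definition smooth' (g : R -> R) : Prop := forall n x, ex_derive_n g n x.
Lemma smooth_Cn g : (forall n, Cn n g) -> smooth' g.
Proof. intros H n x. apply (H n). lia. Qed.
Lemma Cn_smooth g : smooth' g -> forall n, Cn n g.
Proof. intros H n k x _. apply H. Qed.
Lemma RInt_lin_R (f : R->R) u v a b : ex_RInt f (u*a+v) (u*b+v) -> @eq R (RInt (fun y => u * f (u*y+v)) a b) (RInt f (u*a+v) (u*b+v)).
Proof. intros H. exact (RInt_comp_lin f u v a b H). Qed.
Lemma RInt_scal_R (f : R->R) a b l : ex_RInt f a b -> @eq R (RInt (fun x => l * f x) a b) (l * RInt f a b).
Proof. intros H. exact (RInt_scal f a b l H). Qed.
Lemma RInt_plus_R (f g : R->R) a b : ex_RInt f a b -> ex_RInt g a b -> @eq R (RInt (fun x => f x + g x) a b) (RInt f a b + RInt g a b).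
Proof. intros H1 H2. exact (RInt_plus f g a b H1 H2). Qed.
Lemma RInt_minus_R (f g : R->R) a b : ex_RInt f a b -> ex_RInt g a b -> @eq R (RInt (fun x => f x - g x) a b) (RInt f a b - RInt g a b).
Proof. intros H1 H2. exact (RInt_minus f g a b H1 H2). Qed.
Lemma RInt_const_R a b c : @eq R (RInt (fun _ => c) a b) ((b - a) * c).
Proof. exact (RInt_const a b c). Qed.
Lemma RInt_Chasles_R (f : R -> R) a b c : ex_RInt f a b -> ex_RInt f b c -> @eq R (RInt f a b + RInt f b c) (RInt f a c).
Proof. intros H1 H2. exact (RInt_Chasles f a b c H1 H2). Qed.
Lemma ex_RInt_scal_R (f : R->R) a b l : ex_RInt f a b -> ex_RInt (fun x => l * f x) a b.
Proof. intros H. exact (ex_RInt_scal f a b l H). Qed.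
Lemma ex_RInt_minus_R (f g : R->R) a b : ex_RInt f a b -> ex_RInt g a b -> ex_RInt (fun x => f x - g x) a b.
Proof. intros H1 H2. exact (ex_RInt_minus f g a b H1 H2). Qed.
Lemma ex_RInt_plus_R (f g : R->R) a b : ex_RInt f a b -> ex_RInt g a b -> ex_RInt (fun x => f x + g x) a b.
Proof. intros H1 H2. exact (ex_RInt_plus f g a b H1 H2). Qed.
Lemma RInt_swap_R (f : R->R) a b : ex_RInt f a b -> @eq R (RInt f b a) (- RInt f a b).
Proof. intros H. rewrite <- (opp_RInt_swap f a b H). reflexivity. Qed.
Lemma RInt_ext_R (f g : R -> R) a b : (forall x : R, Rmin a b < x < Rmax a b -> f x = g x) -> @eq R (RInt f a b) (RInt g a b).
Proof. intros H. exact (RInt_ext f g a b H). Qed.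

Lemma smooth_cont g : smooth g -> forall x, continuous g x.
Proof. intros H x. apply (@ex_derive_continuous R_AbsRing R_NormedModule g x). apply (proj1 (exDn1 g x)). apply H. Qed.

Lemma cont_exRInt (f : R -> R) a b : (forall x, continuous f x) -> ex_RInt f a b.
Proof. intros H. apply (@ex_RInt_continuous R_CompleteNormedModule f a b). intros; apply H. Qed.

Lemma RInt_zero_ext f a b : (forall x, Rmin a b < x < Rmax a b -> f x = 0) -> RInt f a b = 0.
Proof.
  intros H. rewrite (RInt_ext_R f (fun _ => 0)); auto.
  rewrite RInt_const. unfold scal; simpl; unfold mult; simpl. ring.
Qed.

Definition Ib (Th : R -> R) (x : R) := RInt Th (-1) x.

Section ThetaFacts.
Variable Th : R -> R.
Hypothesis Hs : smooth Th.
Hypothesis Hpos : forall z, -1 < z < 1 -> 0 < Th z.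
Hypothesis Hzero : forall z, (z <= -1 \/ 1 <= z) -> Th z = 0.
Hypothesis Hint : RInt Th (-1) 1 = 1.

Lemma Th_cont x : continuous Th x.
Proof. apply smooth_cont; auto. Qed.

Lemma Th_ge0 x : 0 <= Th x.
Proof.
  destruct (Rle_dec x (-1)). rewrite Hzero; lra.
  destruct (Rle_dec 1 x). rewrite Hzero; lra.
  left; apply Hpos; lra.
Qed.

Lemma Th_exRInt a b : ex_RInt Th a b.
Proof. apply cont_exRInt. exact Th_cont. Qed.

Lemma Th_RInt_Ib a b : RInt Th a b = Ib Th b - Ib Th a.
Proof.
  assert (E : RInt Th (-1) a + RInt Th a b = RInt Th (-1) b)
    by (apply (RInt_Chasles Th); apply Th_exRInt).
  unfold Ib; lra.
Qed.

Lemma Ib_low x : x <= -1 -> Ib Th x = 0.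
Proof.
  intros H. unfold Ib. apply RInt_zero_ext. intros y Hy.
  apply Hzero. left. unfold Rmin, Rmax in Hy. destruct (Rle_dec (-1) x); lra.
Qed.

Lemma Ib_high x : 1 <= x -> Ib Th x = 1.
Proof.
  intros H. assert (E := Th_RInt_Ib 1 x).
  assert (RInt Th 1 x = 0).
  { apply RInt_zero_ext. intros y Hy. apply Hzero. right. unfold Rmin, Rmax in Hy. destruct (Rle_dec 1 x); lra. }
  unfold Ib in *. lra.
Qed.

Lemma Ib_mono a b : a <= b -> Ib Th a <= Ib Th b.
Proof.
  intros H. assert (E := Th_RInt_Ib a b).
  assert (0 <= RInt Th a b). { apply RInt_ge_0; auto. apply Th_exRInt. intros; apply Th_ge0. }
  lra.
Qed.

Lemma Ib_bounds x : 0 <= Ib Th x <= 1.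
Proof.
  destruct (Rle_dec x (-1)). rewrite Ib_low; lra.
  split. rewrite <- (Ib_low (-1)) by lra. apply Ib_mono; lra.
  rewrite <- (Ib_high (Rmax x 1)) by apply Rmax_r. apply Ib_mono. apply Rmax_l.
Qed.

Lemma Ib_cont x : continuous (Ib Th) x.
Proof.
  apply (@continuous_RInt_1 R_NormedModule Th (-1) x (Ib Th)). apply filter_forall. intro z.
  unfold Ib. apply (@RInt_correct R_CompleteNormedModule). apply Th_exRInt.
Qed.

Lemma psi_eq k z : 0 < k ->
  psi'_k Th k z = Ib Th ((z + 1 - k) / k) - Ib Th ((z - 1 + k) / k).
Proof.
  intros Hk. unfold psi'_k, Theta_k.
  set (u := - / k). set (v := z / k).
  rewrite (RInt_ext_R _ (fun y => -1 * (u * Th (u * y + v)))).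
  2:{ intros y _. unfold u, v.
      replace ((z - y) / k) with (- / k * y + z / k) by (field; lra). ring. }
  rewrite RInt_scal_R.
  2:{ apply ex_RInt_scal_R. apply (@ex_RInt_continuous R_CompleteNormedModule (fun y => Th (u * y + v))).
      intros y _. apply (continuous_comp (fun y => u * y + v) Th). 
      apply (@ex_derive_continuous R_AbsRing R_NormedModule). auto_derive; auto. apply Th_cont. }
  rewrite RInt_lin_R by apply Th_exRInt.
  rewrite Th_RInt_Ib. unfold u, v.
  replace (- / k * (-1 + k) + z / k) with ((z + 1 - k) / k) by (field; lra).
  replace (- / k * (1 - k) + z / k) with ((z - 1 + k) / k) by (field; lra).
  ring.
Qed.

Lemma psi_bounds k z : 0 < k <= 1 -> 0 <= psi'_k Th k z <= 1.
Proof.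
  intros Hk. rewrite psi_eq by lra.
  assert (A := Ib_mono ((z - 1 + k) / k) ((z + 1 - k) / k)).
  assert ((z - 1 + k) / k <= (z + 1 - k) / k).
  { unfold Rdiv. apply Rmult_le_compat_r. left; apply Rinv_0_lt_compat; lra. lra. }
  assert (B1 := Ib_bounds ((z - 1 + k) / k)). assert (B2 := Ib_bounds ((z + 1 - k) / k)).
  specialize (A H). lra.
Qed.

Lemma psi_mid k z : 0 < k -> -1 + 2 * k <= z <= 1 - 2 * k -> psi'_k Th k z = 1.
Proof.
  intros Hk Hz. rewrite psi_eq by lra.
  rewrite Ib_high. rewrite Ib_low. ring.
  apply (Rmult_le_reg_r k). lra. unfold Rdiv. rewrite Rmult_assoc, Rinv_l by lra. lra.
  apply (Rmult_le_reg_r k). lra. unfold Rdiv. rewrite Rmult_assoc, Rinv_l by lra. lra.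
Qed.

Lemma psi_cont k z : 0 < k -> continuous (psi'_k Th k) z.
Proof.
  intros Hk.
  apply (continuous_ext (fun z => Ib Th ((z + 1 - k) / k) - Ib Th ((z - 1 + k) / k))).
  intros; rewrite psi_eq; auto.
  apply (continuous_minus (fun z => Ib Th ((z + 1 - k) / k)) (fun z => Ib Th ((z - 1 + k) / k))).
  apply (continuous_comp (fun z => (z + 1 - k) / k) (Ib Th)).
  apply (@ex_derive_continuous R_AbsRing R_NormedModule). auto_derive; auto. apply Ib_cont.
  apply (continuous_comp (fun z => (z - 1 + k) / k) (Ib Th)).
  apply (@ex_derive_continuous R_AbsRing R_NormedModule). auto_derive; auto. apply Ib_cont.
Qed.

End ThetaFacts.

Definition cont_on (f : R -> R) := forall z, -1 <= z <= 1 -> continuous f z.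

Lemma cont_on_RInt f : cont_on f -> ex_RInt f (-1) 1.
Proof.
  intros H. apply (@ex_RInt_continuous R_CompleteNormedModule f).
  intros z Hz. apply H. unfold Rmin, Rmax in Hz. destruct (Rle_dec (-1) 1); lra.
Qed.

Lemma cont_on_mult f g : cont_on f -> cont_on g -> cont_on (fun z => f z * g z).
Proof. intros H1 H2 z Hz. apply (continuous_mult f g); auto. Qed.
Lemma cont_on_minus f g : cont_on f -> cont_on g -> cont_on (fun z => f z - g z).
Proof. intros H1 H2 z Hz. apply (continuous_minus f g); auto. Qed.
Lemma cont_on_const c : cont_on (fun _ => c).
Proof. intros z _. apply continuous_const. Qed.
Lemma cont_on_glob f : (forall z, continuous f z) -> cont_on f.
Proof. intros H z _. auto. Qed.
Lemma cont_on_h mu : 0 < mu -> cont_on (fun z => / (1 + mu - z)).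
Proof.
  intros Hmu z Hz. apply (@ex_derive_continuous R_AbsRing R_NormedModule).
  auto_derive. lra.
Qed.

Lemma h_bounds mu z : 0 < mu -> -1 <= z <= 1 -> 0 < / (1 + mu - z) <= / mu.
Proof.
  intros Hmu Hz. split. apply Rinv_0_lt_compat; lra.
  apply Rinv_le_contravar; lra.
Qed.

Definition Good (w : R -> R) (k : R) :=
  (forall z, continuous w z) /\ (forall z, -1 <= z <= 1 -> 0 <= w z) /\
  @eq R (RInt w (-1) 1) 1 /\
  (forall mu, 0 < mu -> Rabs (RInt (fun z => w z * / (1 + mu - z)) (-1) 1 -
                              RInt (fun z => / 2 * / (1 + mu - z)) (-1) 1) <= 4 * k / mu).

Section Pos.
Variable Th : R -> R.
Hypothesis Hs : smooth Th.
Hypothesis Hpos : forall z, -1 < z < 1 -> 0 < Th z.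
Hypothesis Hzero : forall z, (z <= -1 \/ 1 <= z) -> Th z = 0.
Hypothesis Hint : RInt Th (-1) 1 = 1.
Variable k : R.
Hypothesis Hk : 0 < k <= / 4.

Let P := psi'_k Th k.
Let D := RInt P (-1) 1.

Lemma P_cont z : continuous P z.
Proof. apply psi_cont; auto; lra. Qed.
Lemma P_ex a b : ex_RInt P a b.
Proof. apply cont_exRInt. apply P_cont. Qed.
Lemma P_bnd z : 0 <= P z <= 1.
Proof. apply psi_bounds; auto; lra. Qed.

Lemma D_le : D <= 2.
Proof.
  unfold D. assert (E : @eq R (RInt (fun _ => 1) (-1) 1) 2) by (rewrite RInt_const_R; ring).
  rewrite <- E.
  apply RInt_le. lra. apply P_ex. apply ex_RInt_const. intros; apply P_bnd.
Qed.

Lemma D_ge : 2 - 4 * k <= D.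
Proof.
  unfold D.
  rewrite <- (RInt_Chasles_R P (-1) (-1 + 2 * k) 1) by apply P_ex.
  rewrite <- (RInt_Chasles_R P (-1 + 2 * k) (1 - 2 * k) 1) by apply P_ex.
  assert (0 <= RInt P (-1) (-1 + 2 * k)).
  { apply RInt_ge_0. lra. apply P_ex. intros; apply P_bnd. }
  assert (0 <= RInt P (1 - 2 * k) 1).
  { apply RInt_ge_0. lra. apply P_ex. intros; apply P_bnd. }
  rewrite (RInt_ext_R P (fun _ => 1) (-1 + 2 * k) (1 - 2 * k)).
  rewrite RInt_const_R. lra.
  intros x Hx. unfold P. apply psi_mid; auto. lra.
  unfold Rmin, Rmax in Hx. destruct (Rle_dec (-1 + 2 * k) (1 - 2 * k)); lra.
Qed.

Lemma phi'_pos z : phi'_k Th k z = - (P z / D).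
Proof.
  unfold phi'_k, phi_k. destruct (Req_EM_T k 0) as [e|_]. lra.
  fold P. fold D.
  assert (H1 : is_derive (RInt P (-1)) z (P z)).
  { apply (is_derive_RInt P (RInt P (-1)) (-1) z).
    apply filter_forall. intro y. apply (@RInt_correct R_CompleteNormedModule). apply P_ex.
    apply P_cont. }
  assert (H2 : is_derive (fun y => 1 - y / D) (RInt P (-1) z) (- / D)).
  { auto_derive. auto. ring. }
  assert (H3 := is_derive_comp (fun y => 1 - y / D) (RInt P (-1)) z _ _ H2 H1).
  apply is_derive_unique.
  replace (- (P z / D)) with (scal (P z) (- / D)).
  exact H3. unfold scal; simpl; unfold mult; simpl. field.
  assert (T := D_ge). lra.
Qed.

Lemma good_pos : Good (fun z => P z / D) k.
Proof.
  assert (HD1 := D_ge). assert (HD2 := D_le).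
  assert (HD : 0 < D) by lra.
  split; [|split; [|split]].
  - intro z. apply (continuous_mult P (fun _ => / D)). apply P_cont. apply continuous_const.
  - intros z _. unfold Rdiv. apply Rmult_le_pos. apply P_bnd. left; apply Rinv_0_lt_compat; auto.
  - rewrite (RInt_ext_R _ (fun z => / D * P z)) by (intros; unfold Rdiv; ring).
    rewrite RInt_scal_R by apply P_ex. fold D. field. lra.
  - intros mu Hmu.
    set (h := fun z => / (1 + mu - z)).
    assert (Ch := cont_on_h mu Hmu). fold h in Ch.
    assert (CP : cont_on P) by (apply cont_on_glob; apply P_cont).
    set (A := RInt (fun z => P z * h z) (-1) 1).
    set (B := RInt (fun z => (1 - P z) * h z) (-1) 1).
    assert (EA : @eq R (RInt (fun z => P z / D * h z) (-1) 1) (/ D * A)).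
    { rewrite (RInt_ext_R _ (fun z => / D * (P z * h z))) by (intros; unfold Rdiv; ring).
      apply RInt_scal_R. apply cont_on_RInt. apply cont_on_mult; auto. }
    assert (EB : @eq R (RInt (fun z => / 2 * h z) (-1) 1) (/ 2 * (A + B))).
    { rewrite RInt_scal_R by (apply cont_on_RInt; auto). f_equal.
      unfold A, B. rewrite <- RInt_plus_R.
      apply RInt_ext_R. intros; ring.
      apply cont_on_RInt. apply cont_on_mult; auto.
      apply cont_on_RInt. apply cont_on_mult; auto. apply cont_on_minus; auto. apply cont_on_const. }
    assert (A0 : 0 <= A).
    { apply RInt_ge_0. lra. apply cont_on_RInt. apply cont_on_mult; auto.
      intros z Hz. apply Rmult_le_pos. apply P_bnd. unfold h. left; apply h_bounds; lra. }
    assert (A1 : A <= / mu * D).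
    { unfold D. rewrite <- RInt_scal_R by apply P_ex. apply RInt_le. lra.
      apply cont_on_RInt. apply cont_on_mult; auto.
      apply ex_RInt_scal_R. apply P_ex.
      intros z Hz. rewrite Rmult_comm. apply Rmult_le_compat_r. apply P_bnd. unfold h. apply h_bounds; lra. }
    assert (B0 : 0 <= B).
    { apply RInt_ge_0. lra. apply cont_on_RInt. apply cont_on_mult; auto.
      apply cont_on_minus; auto. apply cont_on_const.
      intros z Hz. apply Rmult_le_pos. assert (T := P_bnd z). lra. unfold h. left; apply h_bounds; lra. }
    assert (B1 : B <= / mu * (2 - D)).
    { assert (E : @eq R (RInt (fun z => 1 - P z) (-1) 1) (2 - D)).
      { rewrite RInt_minus_R. rewrite RInt_const_R. fold D. ring.
        apply ex_RInt_const. apply P_ex. }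
      rewrite <- E.
      rewrite <- RInt_scal_R. apply RInt_le. lra.
      apply cont_on_RInt. apply cont_on_mult; auto.
      apply cont_on_minus; auto. apply cont_on_const.
      apply ex_RInt_scal_R. apply cont_on_RInt. apply cont_on_minus; auto. apply cont_on_const.
      intros z Hz. rewrite Rmult_comm. apply Rmult_le_compat_r. assert (T := P_bnd z). lra.
      unfold h. apply h_bounds; lra.
      apply cont_on_RInt. apply cont_on_minus; auto. apply cont_on_const. }
    assert (G1 : @eq R (RInt (fun z => P z / D * / (1 + mu - z)) (-1) 1) (/ D * A)) by exact EA.
    assert (G2 : @eq R (RInt (fun z => / 2 * / (1 + mu - z)) (-1) 1) (/ 2 * (A + B))) by exact EB.
    cbv beta. rewrite G1, G2.
    assert (Hmu' : 0 < / mu) by (apply Rinv_0_lt_compat; auto).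
    assert (X1 : 0 <= (/ D - / 2)).
    { assert (/ 2 <= / D) by (apply Rinv_le_contravar; lra). lra. }
    assert (X2 : A * (/ D - / 2) <= / mu * D * (/ D - / 2)) by (apply Rmult_le_compat_r; auto).
    assert (X3 : / mu * D * (/ D - / 2) = / mu * (1 - D / 2)) by (field; lra).
    assert (X4 : 0 <= A * (/ D - / 2)) by (apply Rmult_le_pos; auto).
    replace (/ D * A - / 2 * (A + B)) with (A * (/ D - / 2) - / 2 * B) by ring.
    assert (X5 : / mu * (1 - D / 2) <= 4 * k / mu).
    { unfold Rdiv. rewrite (Rmult_comm (4 * k)). apply Rmult_le_compat_l; lra. }
    apply Rabs_le. split; nra.
Qed.

End Pos.

Lemma good_zero Th : Good (fun _ => / 2) 0 /\ forall z, phi'_k Th 0 z = - / 2.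
Proof.
  split.
  - split; [|split; [|split]].
    + intro; apply continuous_const.
    + intros; lra.
    + rewrite RInt_const_R. field.
    + intros mu Hmu. rewrite Rminus_diag, Rabs_R0. unfold Rdiv. lra.
  - intro z. unfold phi'_k, phi_k. destruct (Req_EM_T 0 0) as [_|n]; [|lra].
    apply is_derive_unique. auto_derive. auto. field.
Qed.

Lemma good_exists Th : smooth Th -> (forall z, -1 < z < 1 -> 0 < Th z) ->
  (forall z, (z <= -1 \/ 1 <= z) -> Th z = 0) -> RInt Th (-1) 1 = 1 ->
  forall k, 0 <= k <= / 4 -> exists w, Good w k /\ forall z, phi'_k Th k z = - w z.
Proof.
  intros Hs Hp Hz Hi k Hk. destruct (Req_dec k 0) as [->|nk].
  - exists (fun _ => / 2). apply good_zero.
  - exists (fun z => psi'_k Th k z / RInt (psi'_k Th k) (-1) 1). split.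
    apply good_pos; auto; lra.
    intro z. apply phi'_pos; auto; lra.
Qed.

Definition F (w : R -> R) (mu : R) := RInt (fun z => w z * / (1 + mu - z)) (-1) 1.

Lemma inv_sub_bounds mu mu' z : 0 < mu <= mu' -> -1 <= z <= 1 ->
  (mu' - mu) * / ((2 + mu) * (2 + mu')) <= / (1 + mu - z) - / (1 + mu' - z) <=
  (mu' - mu) * / (mu * mu').
Proof.
  intros Hm Hz.
  replace (/ (1 + mu - z) - / (1 + mu' - z)) with ((mu' - mu) * / ((1 + mu - z) * (1 + mu' - z)))
    by (field; split; lra).
  split; apply Rmult_le_compat_l; try lra; apply Rinv_le_contravar.
  apply Rmult_lt_0_compat; lra. apply Rmult_le_compat; lra.
  apply Rmult_lt_0_compat; lra. apply Rmult_le_compat; lra.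
Qed.

Section Core.
Variable w : R -> R.
Variable k : R.
Hypothesis Hg : Good w k.

Lemma w_cont : cont_on w.
Proof. destruct Hg as [H _]. apply cont_on_glob; auto. Qed.
Lemma w_ge0 z : -1 <= z <= 1 -> 0 <= w z.
Proof. destruct Hg as [_ [H _]]. auto. Qed.
Lemma w_int : @eq R (RInt w (-1) 1) 1.
Proof. destruct Hg as [_ [_ [H _]]]. auto. Qed.

Lemma F_ex mu : 0 < mu -> ex_RInt (fun z => w z * / (1 + mu - z)) (-1) 1.
Proof. intros. apply cont_on_RInt. apply cont_on_mult. apply w_cont. apply cont_on_h; auto. Qed.

Lemma F_diff mu mu' : 0 < mu <= mu' ->
  (mu' - mu) * / ((2 + mu) * (2 + mu')) <= F w mu - F w mu' <= (mu' - mu) * / (mu * mu').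
Proof.
  intros Hm. unfold F. rewrite <- RInt_minus_R by (apply F_ex; lra).
  rewrite (RInt_ext_R _ (fun z => w z * (/ (1 + mu - z) - / (1 + mu' - z)))) by (intros; ring).
  assert (Ex : ex_RInt (fun z => w z * (/ (1 + mu - z) - / (1 + mu' - z))) (-1) 1).
  { apply cont_on_RInt. apply cont_on_mult. apply w_cont. apply cont_on_minus; apply cont_on_h; lra. }
  split.
  - assert (E : @eq R (RInt (fun z => ((mu' - mu) * / ((2 + mu) * (2 + mu'))) * w z) (-1) 1)
                  ((mu' - mu) * / ((2 + mu) * (2 + mu')))).
    { rewrite RInt_scal_R by (apply cont_on_RInt; apply w_cont). rewrite w_int. ring. }
    rewrite <- E. apply RInt_le. lra. apply ex_RInt_scal_R. apply cont_on_RInt; apply w_cont. exact Ex.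
    intros z Hz. rewrite Rmult_comm. apply Rmult_le_compat_l. apply w_ge0; lra.
    apply inv_sub_bounds; lra.
  - assert (E : @eq R (RInt (fun z => ((mu' - mu) * / (mu * mu')) * w z) (-1) 1)
                  ((mu' - mu) * / (mu * mu'))).
    { rewrite RInt_scal_R by (apply cont_on_RInt; apply w_cont). rewrite w_int. ring. }
    rewrite <- E. apply RInt_le. lra. exact Ex. apply ex_RInt_scal_R. apply cont_on_RInt; apply w_cont.
    intros z Hz. rewrite (Rmult_comm _ (w z)). apply Rmult_le_compat_l. apply w_ge0; lra.
    apply inv_sub_bounds; lra.
Qed.

Lemma F_neg mu : mu < -2 -> F w mu < 0.
Proof.
  intros Hm. unfold F.
  assert (Ex : ex_RInt (fun z => w z * / (1 + mu - z)) (-1) 1).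
  { apply cont_on_RInt. apply cont_on_mult. apply w_cont.
    intros z Hz. apply (@ex_derive_continuous R_AbsRing R_NormedModule). auto_derive. lra. }
  apply Rle_lt_trans with (/ mu).
  - assert (E : @eq R (RInt (fun z => / mu * w z) (-1) 1) (/ mu)).
    { rewrite RInt_scal_R by (apply cont_on_RInt; apply w_cont). rewrite w_int. ring. }
    rewrite <- E. apply RInt_le. lra. exact Ex. apply ex_RInt_scal_R. apply cont_on_RInt; apply w_cont.
    intros z Hz. rewrite (Rmult_comm (/ mu)). apply Rmult_le_compat_l. apply w_ge0; lra.
    assert (/ (- mu) <= / (- (1 + mu - z))) by (apply Rinv_le_contravar; lra).
    rewrite !Rinv_opp in H. lra.
  - apply Rinv_lt_0_compat. lra.
Qed.

Lemma F_cont a : 0 < a -> continuity (fun mu => F w (Rmax a mu)).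
Proof.
  intros Ha x. unfold continuity_pt, continue_in, limit1_in, limit_in.
  intros eps Heps. exists (eps * (a * a)). split. apply Rmult_lt_0_compat; nra.
  intros y [_ Hy]. simpl in *. unfold R_dist in *.
  assert (L : forall u v, a <= u <= v -> Rabs (F w u - F w v) <= (v - u) / (a * a)).
  { intros u v Huv. assert (T := F_diff u v ltac:(lra)).
    rewrite Rabs_pos_eq by (assert (0 <= (v - u) * / ((2 + u) * (2 + v))) by
          (apply Rmult_le_pos; [lra| left; apply Rinv_0_lt_compat; apply Rmult_lt_0_compat; lra]); lra).
    apply Rle_trans with ((v - u) * / (u * v)). lra.
    unfold Rdiv. apply Rmult_le_compat_l. lra. apply Rinv_le_contravar. nra. apply Rmult_le_compat; lra. }
  assert (Hm : Rabs (Rmax a y - Rmax a x) <= Rabs (y - x)).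
  { unfold Rmax. destruct (Rle_dec a y), (Rle_dec a x); unfold Rabs;
    repeat destruct Rcase_abs; lra. }
  assert (Hd : Rabs (Rmax a y - Rmax a x) < eps * (a * a)) by lra.
  assert (Ha2 : 0 < a * a) by nra.
  destruct (Rle_dec (Rmax a y) (Rmax a x)).
  - assert (T := L (Rmax a y) (Rmax a x) ltac:(split; [apply Rmax_l| auto])).
    apply Rle_lt_trans with ((Rmax a x - Rmax a y) / (a * a)). auto.
    apply (Rmult_lt_reg_r (a * a)); auto. unfold Rdiv. rewrite Rmult_assoc, Rinv_l by lra.
    rewrite Rabs_left1 in Hd; lra.
  - assert (T := L (Rmax a x) (Rmax a y) ltac:(split; [apply Rmax_l| lra])).
    rewrite Rabs_minus_sym.
    apply Rle_lt_trans with ((Rmax a y - Rmax a x) / (a * a)). auto.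
    apply (Rmult_lt_reg_r (a * a)); auto. unfold Rdiv. rewrite Rmult_assoc, Rinv_l by lra.
    rewrite Rabs_pos_eq in Hd; lra.
Qed.

End Core.

Lemma F0_val mu : 0 < mu ->
  @eq R (RInt (fun z => / 2 * / (1 + mu - z)) (-1) 1) (/ 2 * (ln (2 + mu) - ln mu)).
Proof.
  intros Hmu. rewrite RInt_scal_R by (apply cont_on_RInt; apply cont_on_h; auto).
  f_equal. apply is_RInt_unique.
  assert (H := @is_RInt_derive R_CompleteNormedModule (fun z => - ln (1 + mu - z)) (fun z => / (1 + mu - z)) (-1) 1).
  replace (ln (2 + mu) - ln mu) with (minus (- ln (1 + mu - 1)) (- ln (1 + mu - -1))).
  apply H.
  - intros x Hx. unfold Rmin, Rmax in Hx. destruct (Rle_dec (-1) 1); [|lra].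
    auto_derive. lra. field. lra.
  - intros x Hx. unfold Rmin, Rmax in Hx. destruct (Rle_dec (-1) 1); [|lra].
    apply (@ex_derive_continuous R_AbsRing R_NormedModule). auto_derive. lra.
  - unfold minus, plus, opp; simpl. replace (1 + mu - 1) with mu by ring.
    replace (1 + mu - -1) with (2 + mu) by ring. ring.
Qed.

Definition Lm (M : R) := 2 / (exp (4 * M) - 1).

Lemma exp_gt x : 0 < x -> 1 + x < exp x.
Proof. intros; apply exp_ineq1; lra. Qed.

Lemma l0_bounds (m : nat) M : (1 <= m)%nat -> INR m < M ->
  0 < Lm M /\ Lm M <= 2 / (exp (4 * INR m) - 1) <= / 2.
Proof.
  intros Hm HM. assert (H1 : 1 <= INR m) by (apply (le_INR 1); auto).
  assert (E1 := exp_gt (4 * INR m) ltac:(lra)).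
  assert (E2 : exp (4 * INR m) < exp (4 * M)) by (apply exp_increasing; lra).
  unfold Lm. split; [|split].
  - unfold Rdiv. apply Rmult_lt_0_compat. lra. apply Rinv_0_lt_compat. lra.
  - unfold Rdiv. apply Rmult_le_compat_l. lra. apply Rinv_le_contravar; lra.
  - apply (Rmult_le_reg_r (exp (4 * INR m) - 1)). lra.
    unfold Rdiv. rewrite Rmult_assoc, Rinv_l by lra. lra.
Qed.

Lemma l0_eq (m : nat) : (1 <= m)%nat ->
  let l0 := 2 / (exp (4 * INR m) - 1) in
  0 < l0 /\ @eq R (RInt (fun z => / 2 * / (1 + l0 - z)) (-1) 1) (2 * INR m).
Proof.
  intros Hm l0. assert (H1 : 1 <= INR m) by (apply (le_INR 1); auto).
  assert (E1 := exp_gt (4 * INR m) ltac:(lra)).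
  assert (P : 0 < l0).
  { unfold l0, Rdiv. apply Rmult_lt_0_compat. lra. apply Rinv_0_lt_compat. lra. }
  split; auto. rewrite F0_val by auto.
  rewrite <- ln_div by lra.
  replace ((2 + l0) / l0) with (exp (4 * INR m)).
  rewrite ln_exp. field.
  unfold l0. field. lra.
Qed.

Lemma exist_lam w k (m : nat) :
  Good w k -> (1 <= m)%nat ->
  let l0 := 2 / (exp (4 * INR m) - 1) in
  0 <= k < l0 * l0 / 96 -> l0 <= / 2 ->
  exists lam, F w lam = 2 * INR m /\ l0 / 2 <= lam /\ Rabs (lam - l0) <= 48 * k / l0.
Proof.
  intros Hg Hm l0 Hk Hl.
  destruct (l0_eq m Hm) as [Hl0 E0]. fold l0 in Hl0, E0.
  destruct Hg as [G1 [G2 [G3 G4]]].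
  assert (Hg : Good w k) by (repeat split; auto).
  specialize (G4 l0 Hl0). rewrite E0 in G4. fold (F w l0) in G4.
  set (d := 48 * k / l0).
  assert (Hd0 : 0 <= d) by (unfold d, Rdiv; apply Rmult_le_pos; [lra| left; apply Rinv_0_lt_compat; lra]).
  assert (Hd1 : d <= l0 / 2).
  { unfold d. apply (Rmult_le_reg_r l0). lra. unfold Rdiv. rewrite Rmult_assoc, Rinv_l by lra.
    nra. }
  assert (Hkd : 4 * k / l0 = d / 12) by (unfold d; field; lra).
  rewrite Hkd in G4.
  set (a := l0 - d). set (b := l0 + d).
  assert (Fa : 2 * INR m <= F w a).
  { assert (HH : 0 < a <= l0) by (unfold a; lra). destruct (F_diff w k Hg a l0 HH) as [T _].
    assert (d / 12 <= (l0 - a) * / ((2 + a) * (2 + l0))).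
    { replace (l0 - a) with d by (unfold a; ring). unfold Rdiv.
      apply Rmult_le_compat_l; auto. apply Rinv_le_contravar.
      apply Rmult_lt_0_compat; unfold a; lra. unfold a; nra. }
    apply Rabs_le_between in G4. lra. }
  assert (Fb : F w b <= 2 * INR m).
  { assert (HH : 0 < l0 <= b) by (unfold b; lra). destruct (F_diff w k Hg l0 b HH) as [T _].
    assert (d / 12 <= (b - l0) * / ((2 + l0) * (2 + b))).
    { replace (b - l0) with d by (unfold b; ring). unfold Rdiv.
      apply Rmult_le_compat_l; auto. apply Rinv_le_contravar.
      apply Rmult_lt_0_compat; unfold b; lra. unfold b; nra. }
    apply Rabs_le_between in G4. lra. }
  assert (Ha : 0 < a) by (unfold a; lra).
  assert (Hab : a <= b) by (unfold a, b; lra).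
  destruct (IVT_gen (fun mu => F w (Rmax a mu)) a b (2 * INR m) (F_cont w k Hg a Ha)) as [x [Hx Fx]].
  - rewrite (Rmax_left a a) by lra. rewrite (Rmax_right a b) by lra.
    rewrite Rmin_right by lra. rewrite Rmax_left by lra. lra.
  - rewrite Rmin_left in Hx by lra. rewrite Rmax_right in Hx by lra.
    rewrite Rmax_right in Fx by lra.
    exists x. split; auto. split. unfold a in Hx; lra.
    apply Rabs_le. unfold a, b in Hx. lra.
Qed.

Definition gb (Th : R -> R) (lam : R) (z : R) :=
  (1 + lam - z) * / ((1 + lam - z) ^ 2 + Th (2 / lam * z + - (2 * (1 + lam) / lam))).

Lemma gb_smooth Th lam : smooth Th -> (forall x, 0 <= Th x) -> 0 < Th 0 -> 0 < lam ->
  smooth (gb Th lam).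
Proof.
  intros Hs H0 Hp Hl. unfold smooth. apply smooth_Cn. intro n.
  assert (C1 : Cn n (fun z => 1 + lam - z)).
  { eapply Cn_ext; [| exact (Cn_plus n _ _ (Cn_const n (1 + lam)) (Cn_scal n (-1) _ (Cn_id n)))].
    intro; simpl; ring. }
  unfold gb. apply Cn_mult; auto. apply Cn_inv.
  - apply Cn_plus. eapply Cn_ext; [| exact (Cn_mult n _ _ C1 C1)]. intro; simpl; ring.
    apply Cn_comp_aff. apply Cn_smooth. exact Hs.
  - intro x. destruct (Req_dec x (1 + lam)) as [->|nx].
    + replace (2 / lam * (1 + lam) + - (2 * (1 + lam) / lam)) with 0 by (field; lra).
      replace (1 + lam - (1 + lam)) with 0 by ring. simpl. lra.
    + assert (0 < (1 + lam - x) ^ 2). { apply pow2_gt_0. lra. }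
      assert (T := H0 (2 / lam * x + - (2 * (1 + lam) / lam))). lra.
Qed.

Lemma gb_eq Th lam z : (forall z, (z <= -1 \/ 1 <= z) -> Th z = 0) -> 0 < lam ->
  z <= 1 + lam / 2 -> gb Th lam z = / (1 + lam - z).
Proof.
  intros Hz Hl H. unfold gb. rewrite Hz. field. lra.
  left. replace (2 / lam * z + - (2 * (1 + lam) / lam)) with (2 * (z - (1 + lam)) / lam) by (field; lra).
  apply (Rmult_le_reg_r lam). auto. unfold Rdiv. rewrite Rmult_assoc, Rinv_l by lra. lra.
Qed.

Lemma loc_lt (t c : R) (P : R -> Prop) : t < c -> (forall y, y < c -> P y) -> locally t P.
Proof.
  intros Ht H. assert (Hp : 0 < c - t) by lra.
  exists (mkposreal _ Hp). intros y Hy. apply H.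
  unfold ball in Hy; simpl in Hy; unfold AbsRing_ball, abs, minus, plus, opp in Hy; simpl in Hy.
  apply Rabs_lt_between in Hy. lra.
Qed.

Lemma Dn_inv (c : R) n : forall t, t < c ->
  Derive_n (fun t => / (c - t)) n t = INR (Factorial.fact n) / (c - t) ^ (S n).
Proof.
  induction n; intros t Ht.
  - simpl. field. lra.
  - change (Derive (Derive_n (fun t => / (c - t)) n) t = INR (Factorial.fact (S n)) / (c - t) ^ S (S n)).
    rewrite (Derive_ext_loc _ (fun y => INR (Factorial.fact n) / (c - y) ^ (S n))).
    2:{ apply (loc_lt t c); auto. }
    apply is_derive_unique. auto_derive.
    apply Rmult_integral_contrapositive; split; [lra | apply pow_nonzero; lra].
    change (match n with 0%nat => 1 | S _ => INR n + 1 end) with (INR (S n)).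
    change (Factorial.fact (S n)) with (S n * Factorial.fact n)%nat.
    rewrite mult_INR. rewrite <- !tech_pow_Rmult. unfold Rminus. set (X := (c + - t) ^ n). assert (X <> 0) by (apply pow_nonzero; lra). field. repeat split; auto; intro; lra.
Qed.

Lemma gb_Dn Th lam n z : (forall z, (z <= -1 \/ 1 <= z) -> Th z = 0) -> 0 < lam ->
  -1 <= z <= 1 -> Derive_n (gb Th lam) n z = INR (Factorial.fact n) / (1 + lam - z) ^ (S n).
Proof.
  intros Hz Hl H. rewrite (Derive_n_ext_loc _ (fun t => / (1 + lam - t))).
  apply Dn_inv. lra.
  apply (loc_lt z (1 + lam / 2)). lra. intros y Hy. apply gb_eq; auto; lra.
Qed.

Lemma gb_Dn_bound Th lam n z L : (forall z, (z <= -1 \/ 1 <= z) -> Th z = 0) -> 0 < L <= lam ->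
  -1 <= z <= 1 -> Rabs (Derive_n (gb Th lam) n z) <= INR (Factorial.fact n) / L ^ (S n).
Proof.
  intros Hz Hl H. rewrite gb_Dn by (auto; lra).
  assert (0 < L ^ S n) by (apply pow_lt; lra).
  assert (L ^ S n <= (1 + lam - z) ^ S n) by (apply pow_incr; lra).
  assert (0 < INR (Factorial.fact n)) by (apply lt_0_INR; apply Factorial.lt_O_fact).
  rewrite Rabs_pos_eq.
  unfold Rdiv. apply Rmult_le_compat_l. lra. apply Rinv_le_contravar; lra.
  unfold Rdiv. apply Rmult_le_pos. lra. left. apply Rinv_0_lt_compat. lra.
Qed.

Lemma sqrt_le_1x x : sqrt x <= 1 + x \/ x < 0.
Proof.
  destruct (Rlt_dec x 0). right; auto. left.
  rewrite <- (sqrt_pow2 (1 + x)) by lra. apply sqrt_le_1_alt. nra.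
Qed.

Lemma gb_L2 Th lam : smooth Th -> (forall z, (z <= -1 \/ 1 <= z) -> Th z = 0) ->
  (forall x, 0 <= Th x) -> 0 < Th 0 -> 0 < lam ->
  sqrt (RInt (fun z => gb Th lam z ^ 2) (-1) 1) <= 1 + 2 / (lam * lam).
Proof.
  intros Hs Hz H0 Hp Hl.
  assert (Hsm := gb_smooth Th lam Hs H0 Hp Hl).
  assert (E : RInt (fun z => gb Th lam z ^ 2) (-1) 1 <= 2 / (lam * lam)).
  { assert (E2 : @eq R (RInt (fun _ => / (lam * lam)) (-1) 1) (2 / (lam * lam)))
      by (rewrite RInt_const_R; unfold Rdiv; ring).
    rewrite <- E2. apply RInt_le. lra.
    apply cont_exRInt. intro x. apply (continuous_ext (fun z => gb Th lam z * (gb Th lam z * 1))).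
    intro; simpl; ring.
    apply (continuous_mult (gb Th lam)). apply smooth_cont; auto.
    apply (continuous_mult (gb Th lam)). apply smooth_cont; auto. apply continuous_const.
    apply ex_RInt_const.
    intros x Hx. rewrite gb_eq by (auto; lra).
    assert (A1 : 0 < / (1 + lam - x) <= / lam)
      by (split; [apply Rinv_0_lt_compat; lra | apply Rinv_le_contravar; lra]).
    rewrite Rinv_mult. simpl. nra. }
  destruct (sqrt_le_1x (RInt (fun z => gb Th lam z ^ 2) (-1) 1)). lra.
  rewrite sqrt_neg_0 by lra. assert (0 <= 2 / (lam * lam)).
  { unfold Rdiv. apply Rmult_le_pos. lra. left. apply Rinv_0_lt_compat. nra. }
  lra.
Qed.

Lemma cont_noniso (f : R -> R) x : continuous f x -> -1 <= x <= 1 -> f x <> 0 ->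
  exists z, -1 <= z <= 1 /\ z <> x /\ f z <> 0.
Proof.
  intros Hc Hx Hf.
  assert (He : 0 < Rabs (f x)) by (apply Rabs_pos_lt; auto).
  assert (HH := Hc _ (locally_ball (f x) (mkposreal _ He))).
  destruct HH as [d Hd].
  assert (Hd0 := cond_pos d).
  set (e := Rmin d 1 / 2).
  assert (He1 : 0 < e <= / 2). { unfold e, Rmin. destruct (Rle_dec d 1); lra. }
  assert (He2 : e < d). { unfold e, Rmin. destruct (Rle_dec d 1); lra. }
  set (z := if Rle_dec x 0 then x + e else x - e).
  assert (Hzx : Rabs (z - x) = e).
  { unfold z. destruct (Rle_dec x 0); [replace (x + e - x) with e by ring | replace (x - e - x) with (- e) by ring;
    rewrite Rabs_Ropp]; apply Rabs_pos_eq; lra. }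
  exists z. split; [|split].
  - unfold z. destruct (Rle_dec x 0); lra.
  - intro E. rewrite E in Hzx. rewrite Rminus_diag, Rabs_R0 in Hzx. lra.
  - intro H0. assert (Hb : ball x d z).
    { unfold ball; simpl; unfold AbsRing_ball, abs, minus, plus, opp; simpl.
      replace (z + - x) with (z - x) by ring. lra. }
    specialize (Hd z Hb). unfold ball in Hd; simpl in Hd; unfold AbsRing_ball, abs, minus, plus, opp in Hd; simpl in Hd.
    rewrite H0 in Hd. replace (0 + - f x) with (- f x) in Hd by ring. rewrite Rabs_Ropp in Hd. lra.
Qed.

Lemma RInt_phib Th k w b K mu :
  (forall z, phi'_k Th k z = - w z) ->
  (forall z, -1 <= z <= 1 -> b z = K * / (1 + mu - z)) ->
  ex_RInt (fun z => w z * / (1 + mu - z)) (-1) 1 ->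
  @eq R (RInt (fun zb => phi'_k Th k zb * b zb) (-1) 1) (- K * F w mu).
Proof.
  intros Hp Hb Hex. unfold F. rewrite <- RInt_scal_R by auto.
  apply RInt_ext_R. intros x Hx. rewrite Hp, Hb. ring.
  unfold Rmin, Rmax in Hx. destruct (Rle_dec (-1) 1); lra.
Qed.

Lemma F_ex_gen w k mu : Good w k -> (forall z, -1 <= z <= 1 -> 1 + mu - z <> 0) ->
  ex_RInt (fun z => w z * / (1 + mu - z)) (-1) 1.
Proof.
  intros Hg Hnz. apply cont_on_RInt. apply cont_on_mult. apply (w_cont w k Hg).
  intros z Hz. apply (@ex_derive_continuous R_AbsRing R_NormedModule). auto_derive. apply Hnz; auto.
Qed.

Theorem proposition5p7 :
  forall Theta : R -> R,
    smooth Theta ->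
    (forall z, -1 < z < 1 -> 0 < Theta z) ->
    (forall z, (z <= -1 \/ 1 <= z) -> Theta z = 0) ->
    RInt Theta (-1) 1 = 1 ->
  forall M : R, 1 < M ->
  exists kappa0 : R, 0 < kappa0 /\
  exists (C : R) (Ck : nat -> R),
  forall (m : nat) (kappa : R),
    (1 <= m)%nat -> INR m < M ->
    0 <= kappa < kappa0 ->
    exists (lam1 : R) (b0 : R -> R),
      smooth_on_cc (-1) 1 b0 /\
      solves Theta m kappa lam1 b0 /\
      (* uniqueness modulo constant multiples, among nonzero C^oo solutions *)
      (forall (lam : R) (b : R -> R),
          smooth_on_cc (-1) 1 b ->
          (exists z, -1 <= z <= 1 /\ b z <> 0) ->
          solves Theta m kappa lam b ->
          lam = lam1 /\ exists c : R, forall z, -1 <= z <= 1 -> b z = c * b0 z) /\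
      (forall z, -1 <= z <= 1 -> b0 z = 1 / (1 + lam1 - z)) /\
      Rabs (lam1 - 2 / (exp (4 * INR m) - 1)) <= C * kappa /\
      sqrt (RInt (fun z => b0 z ^ 2) (-1) 1) <= C /\
      (forall (k : nat) (z : R), -1 <= z <= 1 -> Rabs (Derive_n b0 k z) <= Ck k) /\
      (let a1 := / 2 * (- (1 / (2 * INR m)) * exp (- (2 * INR m))
                        * RInt (fun zb => phi'_k Theta kappa zb * b0 zb) (-1) 1) in
       a1 = / 2 * exp (- (2 * INR m))).
Proof.
  intros Th Hs Hp Hz Hi M HM.
  assert (H0 : forall x, 0 <= Th x) by (apply Th_ge0; auto).
  assert (Hp0 : 0 < Th 0) by (apply Hp; lra).
  destruct (l0_bounds 1 M ltac:(lia) ltac:(simpl; lra)) as [HL [HL1 HL2]].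
  set (L := Lm M) in *.
  assert (HLh : L <= / 2) by lra.
  assert (HLL : 0 < L * L) by nra.
  exists (L * L / 96). split. lra.
  exists (48 / L + (1 + 8 / (L * L))).
  exists (fun n => INR (Factorial.fact n) / (L / 2) ^ (S n)).
  intros m k Hm HmM Hk.
  destruct (l0_bounds m M Hm HmM) as [_ [HLl0 Hl0]]. fold L in HLl0.
  set (l0 := 2 / (exp (4 * INR m) - 1)) in *.
  assert (Hm1 : 1 <= INR m) by (apply (le_INR 1); auto).
  assert (Hk4 : 0 <= k <= / 4) by nra.
  destruct (good_exists Th Hs Hp Hz Hi k Hk4) as [w [Hg Hphi]].
  assert (Hk' : 0 <= k < l0 * l0 / 96) by nra.
  destruct (exist_lam w k m Hg Hm Hk' Hl0) as [lam [HF [Hlam Habs]]].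
  fold l0 in HF, Hlam, Habs.
  assert (HlamL : L / 2 <= lam) by lra.
  assert (Hlam0 : 0 < lam) by lra.
  assert (Hnz0 : forall z, -1 <= z <= 1 -> 1 + lam - z <> 0) by (intros; intro; lra).
  assert (Hex := F_ex_gen w k lam Hg Hnz0).
  assert (Hb0 : forall z, -1 <= z <= 1 -> gb Th lam z = 1 * / (1 + lam - z)).
  { intros z Hz1. rewrite gb_eq by (auto; lra). ring. }
  assert (Hint0 := RInt_phib Th k w (gb Th lam) 1 lam Hphi Hb0 Hex).
  rewrite HF in Hint0.
  exists lam, (gb Th lam).
  split; [|split; [|split; [|split; [|split; [|split; [|split]]]]]].
  - exists (gb Th lam). split. apply gb_smooth; auto. intros; reflexivity.
  - intros z Hz1. rewrite Hint0. rewrite gb_eq by (auto; lra). field. split. intro; lra.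
    apply Hnz0; auto.
  - intros lam' b [g' [Hg's Hg'eq]] [z1 [Hz1 Hbz1]] Hsol.
    set (K := - (1 / (2 * INR m)) * RInt (fun zb => phi'_k Th k zb * b zb) (-1) 1).
    assert (HS : forall z, -1 <= z <= 1 -> (1 + lam' - z) * b z = K) by exact Hsol.
    assert (HK : K <> 0).
    { intro HK0.
      assert (E1 : 1 + lam' - z1 = 0).
      { destruct (Rmult_integral _ _ (eq_trans (HS z1 Hz1) HK0)); auto. contradiction. }
      destruct (cont_noniso g' z1 (smooth_cont g' Hg's z1) Hz1) as [z [Hz2 [Hzz Hgz]]].
      rewrite <- Hg'eq; auto.
      apply Hgz. rewrite <- Hg'eq by auto.
      destruct (Rmult_integral _ _ (eq_trans (HS z Hz2) HK0)); auto. lra. }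
    assert (Hnz : forall z, -1 <= z <= 1 -> 1 + lam' - z <> 0).
    { intros z Hz2 E. apply HK. rewrite <- (HS z Hz2). rewrite E. ring. }
    assert (Hbz : forall z, -1 <= z <= 1 -> b z = K * / (1 + lam' - z)).
    { intros z Hz2. rewrite <- (HS z Hz2). field. auto. }
    assert (Hex' := F_ex_gen w k lam' Hg Hnz).
    assert (E := RInt_phib Th k w b K lam' Hphi Hbz Hex').
    assert (EK : K = - (1 / (2 * INR m)) * (- K * F w lam')) by (unfold K at 1; rewrite E; reflexivity).
    assert (E2 : K * (2 * INR m) = K * F w lam').
    { rewrite EK at 1. field. lra. }
    apply Rmult_eq_reg_l in E2; auto.
    assert (Hl' : 0 < lam' \/ lam' < -2).
    { destruct (Rlt_dec 0 lam'). left; auto. destruct (Rlt_dec lam' (-2)). right; auto.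
      exfalso. apply (Hnz (1 + lam')). lra. ring. }
    assert (Heq : lam' = lam).
    { destruct Hl' as [Hl'|Hl'].
      - destruct (Rtotal_order lam' lam) as [Hlt|[Heq|Hgt]]; auto.
        + destruct (F_diff w k Hg lam' lam ltac:(lra)) as [T _].
          assert (0 < (lam - lam') * / ((2 + lam') * (2 + lam))).
          { apply Rmult_lt_0_compat. lra. apply Rinv_0_lt_compat. nra. }
          lra.
        + destruct (F_diff w k Hg lam lam' ltac:(lra)) as [T _].
          assert (0 < (lam' - lam) * / ((2 + lam) * (2 + lam'))).
          { apply Rmult_lt_0_compat. lra. apply Rinv_0_lt_compat. nra. }
          lra.
      - assert (T := F_neg w k Hg lam' Hl'). lra. }
    subst lam'. split; auto. exists K. intros z Hz2. rewrite Hbz, gb_eq; auto; lra.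
  - intros z Hz1. rewrite gb_eq by (auto; lra). unfold Rdiv. ring.
  - fold l0. apply Rle_trans with (48 * k / l0). auto.
    apply Rle_trans with (48 / L * k).
    { unfold Rdiv. rewrite (Rmult_comm 48 k), Rmult_assoc, (Rmult_comm 48 (/ L)), <- Rmult_assoc,
        (Rmult_comm _ k). rewrite Rmult_assoc. apply Rmult_le_compat_l. lra.
      rewrite (Rmult_comm (/ L)). apply Rmult_le_compat_l. lra. apply Rinv_le_contravar; lra. }
    apply Rmult_le_compat_r. lra.
    assert (0 <= 8 / (L * L)). { unfold Rdiv. apply Rmult_le_pos. lra. left; apply Rinv_0_lt_compat; lra. }
    lra.
  - apply Rle_trans with (1 + 2 / (lam * lam)). apply gb_L2; auto.
    assert (2 / (lam * lam) <= 8 / (L * L)).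
    { replace (8 / (L * L)) with (2 / ((L / 2) * (L / 2))) by (field; lra).
      unfold Rdiv. apply Rmult_le_compat_l. lra. apply Rinv_le_contravar. nra.
      apply Rmult_le_compat; lra. }
    assert (0 <= 48 / L). { unfold Rdiv. apply Rmult_le_pos. lra. left; apply Rinv_0_lt_compat; lra. }
    lra.
  - intros n z Hz1. apply gb_Dn_bound; auto. lra.
  - cbv zeta. rewrite Hint0. field. lra.
Qed.
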